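(* There are strictly more first-order-expressible node properties expressible in $\mathsf{inf}\text{-}\mathrm{C}^2$ than properties expressible in $\mathrm{C}^2$: every property expressible in $\mathrm{C}^2$ is expressible both in first-order logic and in $\mathsf{inf}\text{-}\mathrm{C}^2$, but there is a property expressible both in first-order logic and in $\mathsf{inf}\text{-}\mathrm{C}^2$ that is not expressible in $\mathrm{C}^2$. This holds both over directed graphs and over undirected graphs.
   Context: A directed graph of dimension $d$ is $G=(V,E,\lambda)$ with $V$ finite, $E\subseteq V\times V$ without loops, $\lambda:V\to\{0,1\}^d$, viewed as a first-order structure with relation $E$ and unary predicates $P_i=\{v:\lambda(v)_i=1\}$; undirected graphs are those with symmetric $E$. A (node) property assigns a truth value to each node of each graph and is expressible in a logic if some formula $\varphi(x)$ of that logic with one free variable satisfies: $G\models\varphi(v)$ iff the property holds at $v$ in $G$, for all graphs $G$ (of the class considered) and nodes $v$. $\mathrm{C}^2$ is the fragment of first-order logic with equality using only the two variables $x,y$ but allowing counting quantifiers $\exists_k$ for every $k\in\mathbb{N}$ (''there exist at least $k$ distinct elements such that''). $\mathsf{inf}\text{-}\mathrm{C}^2$ is the extension of $\mathrm{C}^2$ allowing infinitary conjunctions and disjunctions (still using only the variables $x,y$). *)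

(* Defs.v *)
From mathcomp Require Import all_boot.
Set Implicit Arguments. Unset Strict Implicit. Unset Printing Implicit Defensive.

Record graph (d : nat) (V : finType) := Graph {
  edge : rel V;
  label : V -> 'I_d -> bool;
  edge_noloop : irreflexive edge }.

Definition gclass (d : nat) := forall V : finType, graph d V -> Prop.
Definition all_graphs (d : nat) : gclass d := fun V G => True.
Definition undirected_graphs (d : nat) : gclass d :=
  fun V G => symmetric (edge G).

Definition node_property (d : nat) :=
  forall V : finType, graph d V -> V -> Prop.

Inductive FO (d : nat) : Type :=
  | FO_E : nat -> nat -> FO d
  | FO_P : 'I_d -> nat -> FO d
  | FO_Eq : nat -> nat -> FO d
  | FO_Not : FO d -> FO d
  | FO_And : FO d -> FO d -> FO d
  | FO_Or : FO d -> FO d -> FO d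
  | FO_Ex : nat -> FO d -> FO d
  | FO_All : nat -> FO d -> FO d.

Definition upd (X V : Type) (eqX : X -> X -> bool) (a : X -> V) (x : X) (u : V) : X -> V :=
  fun z => if eqX z x then u else a z.

Fixpoint FO_sat d (V : finType) (G : graph d V) (a : nat -> V) (f : FO d) : Prop :=
  match f with
  | FO_E x y => edge G (a x) (a y)
  | FO_P i x => label G (a x) i
  | FO_Eq x y => a x = a y
  | FO_Not g => ~ FO_sat G a g
  | FO_And g h => FO_sat G a g /\ FO_sat G a h
  | FO_Or g h => FO_sat G a g \/ FO_sat G a h
  | FO_Ex x g => exists u, FO_sat G (upd eqn a x u) g
  | FO_All x g => forall u, FO_sat G (upd eqn a x u) g
  end.

Fixpoint FO_free d (f : FO d) (z : nat) : Prop :=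
  match f with
  | FO_E x y => z = x \/ z = y
  | FO_P _ x => z = x
  | FO_Eq x y => z = x \/ z = y
  | FO_Not g => FO_free g z
  | FO_And g h | FO_Or g h => FO_free g z \/ FO_free h z
  | FO_Ex x g | FO_All x g => z <> x /\ FO_free g z
  end.

Definition var2 := bool.
Definition vx : var2 := false.
Definition vy : var2 := true.

Inductive C2 (d : nat) : Type :=
  | C2_E : var2 -> var2 -> C2 d
  | C2_P : 'I_d -> var2 -> C2 d
  | C2_Eq : var2 -> var2 -> C2 d
  | C2_Not : C2 d -> C2 d
  | C2_And : C2 d -> C2 d -> C2 d
  | C2_Or : C2 d -> C2 d -> C2 d
  | C2_Ex : var2 -> C2 d -> C2 d
  | C2_All : var2 -> C2 d -> C2 d
  | C2_ExK : nat -> var2 -> C2 d -> C2 d.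

Definition at_least (V : finType) (k : nat) (Q : V -> Prop) : Prop :=
  exists S : {set V}, k <= #|S| /\ forall u, u \in S -> Q u.

Fixpoint C2_sat d (V : finType) (G : graph d V) (a : var2 -> V) (f : C2 d) : Prop :=
  match f with
  | C2_E x y => edge G (a x) (a y)
  | C2_P i x => label G (a x) i
  | C2_Eq x y => a x = a y
  | C2_Not g => ~ C2_sat G a g
  | C2_And g h => C2_sat G a g /\ C2_sat G a h
  | C2_Or g h => C2_sat G a g \/ C2_sat G a h
  | C2_Ex x g => exists u, C2_sat G (upd eqb a x u) g
  | C2_All x g => forall u, C2_sat G (upd eqb a x u) g
  | C2_ExK k x g => at_least k (fun u => C2_sat G (upd eqb a x u) g)
  end.

Fixpoint C2_free d (f : C2 d) (z : var2) : Prop :=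
  match f with
  | C2_E x y => z = x \/ z = y
  | C2_P _ x => z = x
  | C2_Eq x y => z = x \/ z = y
  | C2_Not g => C2_free g z
  | C2_And g h | C2_Or g h => C2_free g z \/ C2_free h z
  | C2_Ex x g | C2_All x g | C2_ExK _ x g => z <> x /\ C2_free g z
  end.

Inductive IC2 (d : nat) : Type :=
  | I_E : var2 -> var2 -> IC2 d
  | I_P : 'I_d -> var2 -> IC2 d
  | I_Eq : var2 -> var2 -> IC2 d
  | I_Not : IC2 d -> IC2 d
  | I_And : IC2 d -> IC2 d -> IC2 d
  | I_Or : IC2 d -> IC2 d -> IC2 d
  | I_BigAnd : forall J : Type, (J -> IC2 d) -> IC2 d
  | I_BigOr : forall J : Type, (J -> IC2 d) -> IC2 d
  | I_Ex : var2 -> IC2 d -> IC2 d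
  | I_All : var2 -> IC2 d -> IC2 d
  | I_ExK : nat -> var2 -> IC2 d -> IC2 d.

Fixpoint IC2_sat d (V : finType) (G : graph d V) (a : var2 -> V) (f : IC2 d) : Prop :=
  match f with
  | I_E x y => edge G (a x) (a y)
  | I_P i x => label G (a x) i
  | I_Eq x y => a x = a y
  | I_Not g => ~ IC2_sat G a g
  | I_And g h => IC2_sat G a g /\ IC2_sat G a h
  | I_Or g h => IC2_sat G a g \/ IC2_sat G a h
  | I_BigAnd J F => forall i : J, IC2_sat G a (F i)
  | I_BigOr J F => exists i : J, IC2_sat G a (F i)
  | I_Ex x g => exists u, IC2_sat G (upd eqb a x u) g
  | I_All x g => forall u, IC2_sat G (upd eqb a x u) g
  | I_ExK k x g => at_least k (fun u => IC2_sat G (upd eqb a x u) g)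
  end.

Fixpoint IC2_free d (f : IC2 d) (z : var2) : Prop :=
  match f with
  | I_E x y => z = x \/ z = y
  | I_P _ x => z = x
  | I_Eq x y => z = x \/ z = y
  | I_Not g => IC2_free g z
  | I_And g h | I_Or g h => IC2_free g z \/ IC2_free h z
  | I_BigAnd J F | I_BigOr J F => exists i : J, IC2_free (F i) z
  | I_Ex x g | I_All x g | I_ExK _ x g => z <> x /\ IC2_free g z
  end.

Definition FO_expressible d (C : gclass d) (P : node_property d) : Prop :=
  exists phi : FO d, (forall z, FO_free phi z -> z = 0) /\
    forall (V : finType) (G : graph d V), C V G ->
      forall a : nat -> V, FO_sat G a phi <-> P V G (a 0).

Definition C2_expressible d (C : gclass d) (P : node_property d) : Prop :=
  exists phi : C2 d, (forall z, C2_free phi z -> z = vx) /\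
    forall (V : finType) (G : graph d V), C V G ->
      forall a : var2 -> V, C2_sat G a phi <-> P V G (a vx).

Definition IC2_expressible d (C : gclass d) (P : node_property d) : Prop :=
  exists phi : IC2 d, (forall z, IC2_free phi z -> z = vx) /\
    forall (V : finType) (G : graph d V), C V G ->
      forall a : var2 -> V, IC2_sat G a phi <-> P V G (a vx).

Definition strict_gain d (C : gclass d) : Prop :=
  (forall P : node_property d, C2_expressible C P ->
      FO_expressible C P /\ IC2_expressible C P) /\
  (exists P : node_property d,
      FO_expressible C P /\ IC2_expressible C P /\ ~ C2_expressible C P).

Arguments all_graphs d : clear implicits.
Arguments undirected_graphs d : clear implicits.

(* Main.v *)
Require Import Defs.
From mathcomp Require Import all_boot zify.
From Stdlib Require Import Classical FunctionalExtensionality.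
From Stdlib Require List.
Set Implicit Arguments. Unset Strict Implicit. Unset Printing Implicit Defensive.

Lemma at_least_iff (V : finType) k (Q1 Q2 : V -> Prop) :
  (forall u, Q1 u <-> Q2 u) -> at_least k Q1 <-> at_least k Q2.
Proof.
move=> H; split=> -[S [HS HQ]]; exists S; split=> // u /HQ; apply H.
Qed.

Lemma at_leastE (V : finType) (x0 : V) k (Q : V -> Prop) :
  at_least k Q <-> exists f : nat -> V,
    (forall i j, i < k -> j < k -> f i = f j -> i = j) /\ (forall i, i < k -> Q (f i)).
Proof.
split.
- move=> [S [HS HQ]]; exists (fun i => nth x0 (enum S) i); split.
  + move=> i j hi hj E; apply/eqP.
    have hs : size (enum S) = #|S| by rewrite cardE.
    rewrite -(nth_uniq x0 _ _ (enum_uniq (mem S))) ?E // hs; exact: leq_trans HS.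
  + move=> i hi; apply: HQ; rewrite -mem_enum; apply: mem_nth; rewrite -cardE.
    exact: leq_trans HS.
- move=> [f [Hi HQ]]; exists [set f (val i) | i : 'I_k]; split.
  + have inj : injective (fun i : 'I_k => f (val i)).
      by move=> i j E; apply: val_inj; apply: Hi (ltn_ord i) (ltn_ord j) E.
    by rewrite card_imset // card_ord.
  + by move=> u /imsetP [i _ ->]; exact: HQ (ltn_ord i).
Qed.

Lemma at_least_exact (V : finType) k (Q : V -> Prop) :
  at_least k Q -> exists S : {set V}, #|S| = k /\ forall u, u \in S -> Q u.
Proof.
case: k => [|k] H.
  by exists set0; rewrite cards0; split => // u; rewrite in_set0.
have [S [HS _]] := H.
have : 0 < #|S| by exact: leq_trans HS.
case/card_gt0P => x0 _.
have [f [Hi HQ]] := (at_leastE x0 _ Q).1 H.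
exists [set f (val i) | i : 'I_k.+1]; split.
  have inj : injective (fun i : 'I_k.+1 => f (val i)).
    by move=> i j E; apply: val_inj; apply: Hi (ltn_ord i) (ltn_ord j) E.
  by rewrite card_imset // card_ord.
by move=> u /imsetP [i _ ->]; exact: HQ (ltn_ord i).
Qed.

Section Trans.
Variable d : nat.

Fixpoint c2i (f : C2 d) : IC2 d :=
  match f with
  | C2_E x y => I_E d x y
  | C2_P i x => I_P i x
  | C2_Eq x y => I_Eq d x y
  | C2_Not g => I_Not (c2i g)
  | C2_And g h => I_And (c2i g) (c2i h)
  | C2_Or g h => I_Or (c2i g) (c2i h)
  | C2_Ex x g => I_Ex x (c2i g)
  | C2_All x g => I_All x (c2i g)
  | C2_ExK k x g => I_ExK k x (c2i g)
  end.

Lemma c2i_sat (V : finType) (G : graph d V) f a :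
  IC2_sat G a (c2i f) <-> C2_sat G a f.
Proof.
elim: f a => [x y|i x|x y|g IH|g IHg h IHh|g IHg h IHh|x g IH|x g IH|k x g IH] a //=.
- by rewrite IH.
- by rewrite IHg IHh.
- by rewrite IHg IHh.
- by split=> -[u Hu]; exists u; apply/IH.
- by split=> Hu u; apply/IH.
- by apply: at_least_iff => u; apply: IH.
Qed.

Lemma c2i_free f z : IC2_free (c2i f) z <-> C2_free f z.
Proof.
elim: f => [x y|i x|x y|g IH|g IHg h IHh|g IHg h IHh|x g IH|x g IH|k x g IH] //=.
- by rewrite IHg IHh.
- by rewrite IHg IHh.
- by rewrite IH.
- by rewrite IH.
- by rewrite IH.
Qed.

Definition fo_true : FO d := FO_All 0 (FO_Eq d 0 0).
Definition fconj (l : seq (FO d)) : FO d := foldr (@FO_And d) fo_true l.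

Fixpoint exblock (base k : nat) (body : FO d) : FO d :=
  match k with
  | 0 => body
  | k'.+1 => FO_Ex (base + k') (exblock base k' body)
  end.

Fixpoint conjN (k : nat) (F : nat -> FO d) : FO d :=
  match k with
  | 0 => fo_true
  | k'.+1 => FO_And (F k') (conjN k' F)
  end.

Definition distf (base k : nat) : FO d :=
  conjN k (fun i => conjN i (fun j => FO_Not (FO_Eq d (base + i) (base + j)))).

Fixpoint tr (n : nat) (rho : var2 -> nat) (f : C2 d) : FO d :=
  match f with
  | C2_E x y => FO_E d (rho x) (rho y)
  | C2_P i x => FO_P i (rho x)
  | C2_Eq x y => FO_Eq d (rho x) (rho y)
  | C2_Not g => FO_Not (tr n rho g)
  | C2_And g h => FO_And (tr n rho g) (tr n rho h)
  | C2_Or g h => FO_Or (tr n rho g) (tr n rho h)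
  | C2_Ex x g => FO_Ex n (tr n.+1 (upd eqb rho x n) g)
  | C2_All x g => FO_All n (tr n.+1 (upd eqb rho x n) g)
  | C2_ExK k x g => exblock n k (FO_And (distf n k)
        (conjN k (fun i => tr (n + k) (upd eqb rho x (n + i)) g)))
  end.

Lemma fconj_sat (V : finType) (G : graph d V) a l :
  FO_sat G a (fconj l) <-> forall f, List.In f l -> FO_sat G a f.
Proof.
elim: l => [|f l IH] /=.
  by split=> // _ u.
rewrite IH; split=> [[Hf Hl] g|H].
  by case=> [<-|/Hl].
by split; [apply: H; left | move=> g Hg; apply: H; right].
Qed.

Lemma fconj_free l z : FO_free (fconj l) z -> exists2 f, List.In f l & FO_free f z.
Proof.
elim: l => [|f l IH] /=; first by move=> [H [H1|H1]].
case=> [H|/IH [g Hg Hz]]; first by exists f; [left|].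
by exists g; [right|].
Qed.

Definition ovr (V : Type) (a : nat -> V) base k (f : nat -> V) : nat -> V :=
  fun z => if (base <= z) && (z < base + k) then f (z - base) else a z.

Lemma exblock_sat (V : finType) (G : graph d V) base k body a :
  FO_sat G a (exblock base k body) <->
  exists f : nat -> V, FO_sat G (ovr a base k f) body.
Proof.
elim: k a => [|k IH] a /=.
  have E : forall f, ovr a base 0 f = a.
    by move=> f; apply: functional_extensionality => z; rewrite /ovr addn0; case: leqP.
  split; first by move=> H; exists a; rewrite E.
  by move=> [f]; rewrite E.
have key : forall u f, ovr (upd eqn a (base + k) u) base k f =
     ovr a base k.+1 (fun i => if i == k then u else f i).
  move=> u f; apply: functional_extensionality => z; rewrite /ovr /upd.
  case: (eqVneq z (base + k)) => [->|hne].
    by rewrite ltnn andbF eqnE eqxx leq_addr addnS ltnSn addKn eqxx.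
  rewrite eqnE (negbTE hne) addnS ltnS (leq_eqVlt z) (negbTE hne) /=.
  case: ifP => // /andP [h1 h2]; rewrite ifF //; apply/negbTE; apply/eqP => E; lia.
split.
- move=> [u /IH [f Hf]].
  by exists (fun i => if i == k then u else f i); rewrite -key.
- move=> [f Hf]; exists (f k); apply/IH; exists f; rewrite key.
  suff -> : (fun i => if i == k then f k else f i) = f by [].
  by apply: functional_extensionality => i; case: eqP => [->|].
Qed.

Lemma conjN_sat (V : finType) (G : graph d V) a k F :
  FO_sat G a (conjN k F) <-> forall i, i < k -> FO_sat G a (F i).
Proof.
elim: k => [|k IH] /=; first by split=> // _ u.
rewrite IH; split=> [[H1 H2] i|H].
  by rewrite ltnS leq_eqVlt => /orP [/eqP ->|/H2].
by split; [apply: H | move=> i hi; apply: H; exact: ltnW].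
Qed.

Lemma conjN_free k F z : FO_free (conjN k F) z -> exists2 i, i < k & FO_free (F i) z.
Proof.
elim: k => [|k IH] /=; first by move=> [H [H1|H1]].
case=> [H|/IH [i hi Hz]]; first by exists k.
by exists i => //; exact: ltnW.
Qed.

Lemma exblock_free base k body z :
  FO_free (exblock base k body) z -> ~ (base <= z < base + k) /\ FO_free body z.
Proof.
elim: k => [|k IH] /=; first by move=> H; split => //; rewrite addn0; case: leqP.
move=> [hz /IH [h1 h2]]; split => // /andP [a1 a2]; apply: h1; apply/andP; split => //.
rewrite addnS ltnS leq_eqVlt in a2; case/orP: a2 => // /eqP; done.
Qed.

Lemma upd_comp (V : Type) (a : nat -> V) (rho : var2 -> nat) n x u :
  (forall v, rho v < n) ->
  (fun v => upd eqn a n u (upd eqb rho x n v)) = upd eqb (fun v => a (rho v)) x u.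
Proof.
move=> Hr; apply: functional_extensionality => v; rewrite /upd.
case: (eqb v x); first by rewrite eqnE eqxx.
by rewrite eqnE; have := Hr v; case: eqP => // ->; rewrite ltnn.
Qed.

Lemma tr_sat (V : finType) (G : graph d V) f n rho a :
  (forall v, rho v < n) ->
  FO_sat G a (tr n rho f) <-> C2_sat G (fun v => a (rho v)) f.
Proof.
elim: f n rho a => [x y|i x|x y|g IH|g IHg h IHh|g IHg h IHh|x g IH|x g IH|k x g IH] n rho a Hr //=.
- by rewrite IH.
- by rewrite IHg ?IHh.
- by rewrite IHg ?IHh.
- have Hr' : forall v, upd eqb rho x n v < n.+1.
    by move=> v; rewrite /upd; case: (eqb v x) => //; exact: ltnW (Hr v).
  split=> -[u Hu]; exists u; move: Hu; rewrite IH // upd_comp //.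
- have Hr' : forall v, upd eqb rho x n v < n.+1.
    by move=> v; rewrite /upd; case: (eqb v x) => //; exact: ltnW (Hr v).
  split=> Hu u; move: (Hu u); rewrite IH // upd_comp //.
- rewrite exblock_sat (at_leastE (a 0)).
  have Eb : forall (f : nat -> V) i, i < k ->
      (fun v => ovr a n k f (upd eqb rho x (n + i) v)) = upd eqb (fun v => a (rho v)) x (f i).
    move=> f i hi; apply: functional_extensionality => v; rewrite /upd /ovr.
    case: (eqb v x); first by rewrite leq_addr ltn_add2l hi addKn.
    by have := Hr v; case: leqP => //= h1 h2; rewrite ltnNge (ltnW h2) in h1.
  have Ef : forall (f : nat -> V) i, i < k -> ovr a n k f (n + i) = f i.
    by move=> f i hi; rewrite /ovr leq_addr ltn_add2l hi addKn.
  have Hri : forall i v, i < k -> upd eqb rho x (n + i) v < n + k.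
    move=> i v hi; rewrite /upd; case: (eqb v x); first by rewrite ltn_add2l.
    exact: leq_trans (Hr v) (leq_addr _ _).
  split=> -[f /= [Hd Hb]]; exists f; split => /=.
  + move: Hd; rewrite /distf conjN_sat => Hd.
    have D : forall i j, j < i -> i < k -> f i <> f j.
      move=> i j h hi; move: (Hd i hi) => /=; rewrite conjN_sat => /(_ j h) /=.
      by rewrite !Ef //; exact: ltn_trans h hi.
    move=> i j hi hj E; case: (ltngtP i j) => // h.
    * by case: (D j i h hj).
    * by case: (D i j h hi).
  + move=> i hi; move: Hb; rewrite conjN_sat => /(_ i hi); rewrite IH //; last by move=> v; apply: Hri.
    by rewrite Eb.
  + rewrite /distf conjN_sat => i hi; rewrite conjN_sat => j hj /=; rewrite !Ef //; last exact: ltn_trans hj hi.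
    by move/(Hd _ _ hi (ltn_trans hj hi)) => E; rewrite E ltnn in hj.
  + rewrite conjN_sat => i hi; rewrite IH; last by move=> v; apply: Hri.
    by rewrite Eb //; apply: Hb.
Qed.

Lemma tr_free f n rho z :
  FO_free (tr n rho f) z -> exists2 v, C2_free f v & z = rho v.
Proof.
elim: f n rho => [x y|i x|x y|g IH|g IHg h IHh|g IHg h IHh|x g IH|x g IH|k x g IH] n rho /=.
- by case=> ->; [exists x|exists y]; auto.
- by move=> ->; exists x.
- by case=> ->; [exists x|exists y]; auto.
- by move/IH.
- by case=> [/IHg|/IHh] [v Hv ->]; exists v; auto.
- by case=> [/IHg|/IHh] [v Hv ->]; exists v; auto.
- move=> [hz /IH [v Hv]]; rewrite /upd; case: eqbP => [_ E|hv ->]; first by [].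
  by exists v.
- move=> [hz /IH [v Hv]]; rewrite /upd; case: eqbP => [_ E|hv ->]; first by [].
  by exists v.
- move=> /exblock_free [hz [/conjN_free [i hi /conjN_free [j hj [E|E]]]|/conjN_free [i hi /IH [v Hv]]]].
  + by case: hz; rewrite E leq_addr ltn_add2l.
  + by case: hz; rewrite E leq_addr ltn_add2l (ltn_trans hj hi).
  + rewrite /upd; case: eqbP => [_ E|hv ->].
      by case: hz; rewrite E leq_addr ltn_add2l.
    by exists v.
Qed.

End Trans.

Lemma part1 d (C : gclass d) (P : node_property d) :
  C2_expressible C P -> FO_expressible C P /\ IC2_expressible C P.
Proof.
move=> [phi [Hfree Hsem]]; split.
- pose rho0 := fun v : var2 => if v then 1 else 0.
  exists (tr 2 rho0 phi); split.
    by move=> z /tr_free [v /Hfree -> ->].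
  move=> V G HC a; rewrite tr_sat; last by case.
  exact: Hsem.
- exists (c2i phi); split.
    by move=> z /c2i_free /Hfree.
  by move=> V G HC a; rewrite c2i_sat; apply: Hsem.
Qed.

Definition nested (V : finType) (e : rel V) : Prop :=
  forall x y : V, x <> y ->
    (forall z, e x z -> z <> y -> e y z) \/ (forall z, e y z -> z <> x -> e x z).

Definition degE (V : finType) (e : rel V) (x : V) := #|[set z | e x z]|.

Definition monrel (R : nat -> nat -> Prop) := forall i i' j, R i j -> i <= i' -> R i' j.

Lemma nested_L (V : finType) (e : rel V) a b b' :
  symmetric e -> irreflexive e -> nested e ->
  e a b -> degE e b <= degE e b' -> a <> b' -> e a b'.
Proof.
move=> Hs Hi Hn hab hdeg hab'.
case: (eqVneq b b') => [<-|hbb'] //.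
have hne : b <> b' by apply/eqP.
case: (Hn b b' hne) => [H|H].
  by rewrite Hs; apply: H => //; rewrite Hs.
apply/negPn/negP => /negP nab'.
pose Nb := [set z | e b z]; pose Nb' := [set z | e b' z].
have sub : (Nb' :\ b) \subset ((Nb :\ b') :\ a).
  apply/subsetP => z; rewrite !inE => /andP [hzb hz].
  have hz' : e b z by apply: H => //; exact/eqP.
  rewrite hz' andbT; apply/andP; split.
    by apply/eqP => E; apply: nab'; rewrite -E Hs.
  by apply/eqP => E; move: hz; rewrite E Hi.
have c1 := subset_leq_card sub.
have e1 := cardsD1 b Nb'.
have e2 := cardsD1 b' Nb.
have e3 := cardsD1 a (Nb :\ b').
have ha : a \in Nb :\ b' by rewrite !inE Hs hab andbT; apply/eqP.
rewrite ha in e3.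
have hbb : (b \in Nb') = (b' \in Nb) by rewrite !inE Hs.
move: hdeg; rewrite /degE -/Nb -/Nb' e1 e2 e3 hbb.
case: (b' \in Nb) => /=; lia.
Qed.

Lemma nested_iff (V : finType) (e : rel V) :
  symmetric e -> irreflexive e ->
  (nested e <-> exists R, monrel R /\
     forall u w, u <> w -> (e u w <-> R (degE e u) (degE e w))).
Proof.
move=> Hs Hi; split.
- move=> Hn.
  exists (fun i j => exists x y, x <> y /\ e x y /\ degE e x <= i /\ degE e y = j).
  split.
    move=> i i' j [x [y [h1 [h2 [h3 h4]]]]] hi; exists x, y; do !split => //.
    exact: leq_trans h3 hi.
  move=> u w huw; split.
    by move=> h; exists u, w.
  move=> [x [y [hxy [exy [hx hy]]]]].
  case: (eqVneq y u) => [Eyu|hyu].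
  + have h1 : e y w.
      apply: (@nested_L V e y x w) => //; first by rewrite Hs.
        by rewrite -hy Eyu.
      by rewrite Eyu.
    by rewrite -Eyu.
  + have h1 : e y u.
      apply: (@nested_L V e y x u) => //; first by rewrite Hs.
      exact/eqP.
    apply: (@nested_L V e u y w) => //; first by rewrite Hs.
    by rewrite hy.
- move=> [R [Hm HR]] x y hxy.
  have gen : forall x y, x <> y -> degE e x <= degE e y ->
      forall z, e x z -> z <> y -> e y z.
    move=> x1 y1 h1 hd z hz hzy.
    have hxz : x1 <> z by move=> E; move: hz; rewrite E Hi.
    apply/HR; first by move=> E; apply: hzy.
    apply: Hm hd; exact/HR.
  case: (leqP (degE e x) (degE e y)) => hd.
    by left; apply: gen.
  right; apply: gen; [by move=> E; apply: hxy | exact: ltnW].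
Qed.

Definition Pn d : node_property d :=
  fun V G v => symmetric (edge G) /\ nested (edge G).

Lemma imp_or (A B : Prop) : (~ A \/ B) <-> (A -> B).
Proof. split; [by case=> [h a|h a] //; case: (h a)|move=> h; case: (classic A) => a; [right; exact: h a|by left]]. Qed.

Lemma sym_iff (V : finType) (e : rel V) : symmetric e <-> forall u w, e u w -> e w u.
Proof.
split; first by move=> H u w; rewrite H.
by move=> H u w; apply/idP/idP; apply: H.
Qed.

Section Formulas.
Variable d : nat.

Definition fImp (a b : FO d) := FO_Or (FO_Not a) b.
Definition FSym : FO d := FO_All 1 (FO_All 2 (fImp (FO_E d 1 2) (FO_E d 2 1))).
Definition FNest : FO d :=
  FO_All 1 (FO_All 2 (fImp (FO_Not (FO_Eq d 1 2))
    (FO_Or (FO_All 3 (fImp (FO_E d 1 3) (fImp (FO_Not (FO_Eq d 3 2)) (FO_E d 2 3))))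
           (FO_All 3 (fImp (FO_E d 2 3) (fImp (FO_Not (FO_Eq d 3 1)) (FO_E d 1 3))))))).
Definition phiF : FO d := FO_And FSym FNest.

Lemma phiF_free z : ~ FO_free phiF z.
Proof. rewrite /=; lia. Qed.

Lemma phiF_sat (V : finType) (G : graph d V) a : FO_sat G a phiF <-> Pn G (a 0).
Proof.
rewrite /Pn sym_iff /=; split.
- move=> [HS HN]; split.
    by move=> u w; apply/imp_or; apply: HS.
  move=> u w huw; case: (HN u w) => [H|[H|H]]; first by case: H.
  + left=> z; move/imp_or: (H z) => H1 h1; move/imp_or: (H1 h1) => H2 h2.
    by apply: H2.
  + right=> z; move/imp_or: (H z) => H1 h1; move/imp_or: (H1 h1) => H2 h2.
    by apply: H2.
- move=> [HS HN]; split.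
    by move=> u w; apply/imp_or; apply: HS.
  move=> u w; apply/imp_or => huw.
  case: (HN u w huw) => H; [left|right] => z; apply/imp_or => h1; apply/imp_or => h2;
    exact: H.
Qed.

Definition iImp (a b : IC2 d) := I_Or (I_Not a) b.
Definition degIs (i : nat) (z : var2) : IC2 d :=
  I_And (I_ExK i (~~ z) (I_E d z (~~ z))) (I_Not (I_ExK i.+1 (~~ z) (I_E d z (~~ z)))).
Arguments degIs : simpl never.
Definition ISym : IC2 d := I_All vx (I_All vy (iImp (I_E d vx vy) (I_E d vy vx))).
Definition MonRel := {R : nat -> nat -> Prop | monrel R}.
Definition DR (R : MonRel) : IC2 d :=
  I_BigOr (fun p : {p : nat * nat | sval R p.1 p.2} =>
     I_And (degIs (sval p).1 vx) (degIs (sval p).2 vy)).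
Arguments DR : simpl never.
Definition ICore (R : MonRel) : IC2 d :=
  I_All vx (I_All vy (iImp (I_Not (I_Eq d vx vy))
     (I_And (iImp (I_E d vx vy) (DR R)) (iImp (DR R) (I_E d vx vy))))).
Definition psiI : IC2 d := I_And ISym (I_BigOr ICore).

Lemma psiI_free z : ~ IC2_free psiI z.
Proof. rewrite /=; case: z; intuition; case: H0 => R [H1 [H2 _]]; [exact: H2|exact: H1]. Qed.

Lemma at_least_bool (V : finType) k (p : pred V) :
  at_least k (fun u => p u) <-> k <= #|[set u | p u]|.
Proof.
split.
  move=> [S [HS HQ]]; apply: leq_trans HS _; apply: subset_leq_card.
  by apply/subsetP => u /HQ; rewrite inE.
by move=> H; exists [set u | p u]; split => // u; rewrite inE.
Qed.

Lemma degIs_sat (V : finType) (G : graph d V) a i z :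
  IC2_sat G a (degIs i z) <-> degE (edge G) (a z) = i.
Proof.
case: z; rewrite /degIs /= !at_least_bool /degE;
(split; first by move=> [h1 h2]; apply/eqP; rewrite eqn_leq h1 andbT leqNgt; apply/negP);
by move=> <-; rewrite ltnn.
Qed.

Lemma sat_And (V : finType) (G : graph d V) a f g :
  IC2_sat G a (I_And f g) <-> IC2_sat G a f /\ IC2_sat G a g.
Proof. by []. Qed.
Lemma sat_BigOr (V : finType) (G : graph d V) a J (F : J -> IC2 d) :
  IC2_sat G a (I_BigOr F) <-> exists i, IC2_sat G a (F i).
Proof. by []. Qed.

Lemma DR_sat (V : finType) (G : graph d V) a R :
  IC2_sat G a (DR R) <-> sval R (degE (edge G) (a vx)) (degE (edge G) (a vy)).
Proof.
rewrite /DR sat_BigOr; split.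
  by move=> [p]; rewrite sat_And !degIs_sat; case: p => [[i j] /= Hij] [-> ->].
move=> H; exists (exist _ (_, _) H); rewrite sat_And !degIs_sat //.
Qed.

Lemma sat_Or (V : finType) (G : graph d V) a f g :
  IC2_sat G a (I_Or f g) <-> IC2_sat G a f \/ IC2_sat G a g.
Proof. by []. Qed.
Lemma sat_Not (V : finType) (G : graph d V) a f :
  IC2_sat G a (I_Not f) <-> ~ IC2_sat G a f.
Proof. by []. Qed.
Lemma sat_All (V : finType) (G : graph d V) a x f :
  IC2_sat G a (I_All x f) <-> forall u, IC2_sat G (upd eqb a x u) f.
Proof. by []. Qed.

Lemma ICore_sat (V : finType) (G : graph d V) a R :
  IC2_sat G a (ICore R) <-> forall u w, u <> w ->
     (edge G u w <-> sval R (degE (edge G) u) (degE (edge G) w)).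
Proof.
rewrite /ICore sat_All; split=> H u.
- move=> w huw; move: (H u); rewrite sat_All => /(_ w).
  rewrite /iImp !(sat_Or, sat_Not, sat_And) !DR_sat /upd /= => -[H0|[H1 H2]].
    by case: H0.
  move/imp_or: H1; move/imp_or: H2 => H2 H1; split; [exact: H1|exact: H2].
- rewrite sat_All => w.
  rewrite /iImp !(sat_Or, sat_Not, sat_And) !DR_sat /upd /=; apply/imp_or => huw.
  by split; apply/imp_or => h; apply/(H u w huw).
Qed.

Lemma psiI_sat (V : finType) (G : graph d V) a : IC2_sat G a psiI <-> Pn G (a vx).
Proof.
rewrite /Pn /psiI sat_And sat_BigOr.
have Hi := @edge_noloop d V G.
have HS0 : IC2_sat G a ISym <-> forall u w, edge G u w -> edge G w u.
  by rewrite /ISym /=; split=> H u w; apply/imp_or; apply: H.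
rewrite HS0 -sym_iff; split.
- move=> [Hs [R HR]]; split => //; apply/nested_iff => //.
  exists (sval R); split; first exact: (svalP R).
  by move/ICore_sat: HR.
- move=> [Hs Hn]; split => //.
  have [R [Hm HR]] := (nested_iff Hs Hi).1 Hn.
  by exists (exist _ R Hm); apply/ICore_sat.
Qed.

Lemma Pn_FO (C : gclass d) : FO_expressible C (@Pn d).
Proof.
exists phiF; split; first by move=> z /phiF_free.
by move=> V G _ a; apply: phiF_sat.
Qed.

Lemma Pn_IC2 (C : gclass d) : IC2_expressible C (@Pn d).
Proof.
exists psiI; split; first by move=> z /psiI_free.
by move=> V G _ a; apply: psiI_sat.
Qed.

End Formulas.

Section Game.
Variables (d s n : nat).

Definition VV := ('I_(s.*2).+1 * 'I_n.+2)%type.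
Definition cls (u : VV) : nat := u.1.

Definition edgeK (b : bool) : rel VV := fun u w =>
  [&& u != w, (s.*2).+1 <= cls u + cls w & ~~ [&& b, cls u == s.+1 & cls w == s.+1]].

Lemma edgeK_irr b : irreflexive (edgeK b).
Proof. by move=> u; rewrite /edgeK eqxx. Qed.

Lemma edgeK_sym b : symmetric (edgeK b).
Proof.
move=> u w; rewrite /edgeK eq_sym addnC; congr [&& _, _ & ~~ _].
by case: b; rewrite //= andbC.
Qed.

Definition K (b : bool) : graph d VV := @Graph d VV (edgeK b) (fun _ _ => false) (@edgeK_irr b).

Definition mid r i := (r <= i) && (i + r < (s.*2).+1).
Definition pt r (u w : VV) := if mid r (cls u) then mid r (cls w) else u == w.
Definition pairZ r b1 b2 (u1 u2 w1 w2 : VV) :=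
  [&& (u1 == u2) == (w1 == w2), edgeK b1 u1 u2 == edgeK b2 w1 w2, pt r u1 w1 & pt r u2 w2].
Definition Z r b1 b2 (a b : var2 -> VV) := pairZ r b1 b2 (a vx) (a vy) (b vx) (b vy).

Lemma pt_sym r u w : pt r u w -> pt r w u.
Proof.
rewrite /pt; case: (boolP (mid r (cls u))) => hu.
  by move=> ->.
by move=> /eqP <-; rewrite (negbTE hu).
Qed.

Lemma mid_down r i : mid r.+1 i -> mid r i.
Proof. rewrite /mid; lia. Qed.

Lemma pt_down r u w : pt r.+1 u w -> pt r u w.
Proof.
rewrite /pt; case: (boolP (mid r.+1 (cls u))) => hu.
  by move=> hw; rewrite (mid_down hu) (mid_down hw).
by move=> /eqP <-; case: ifP.
Qed.

Lemma cls_inord k (c : 'I_n.+2) : k <= s.*2 -> cls (inord k, c) = k.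
Proof. by move=> hk; rewrite /cls /= inordK. Qed.

Lemma forth_core r b1 b2 p q (S : {set VV}) :
  r.+2 <= s -> #|S| <= n -> pt r.+1 p q ->
  exists g : VV -> VV, {in S &, injective g} /\
     forall u, u \in S -> pairZ r b1 b2 u p (g u) q.
Proof.
move=> hrs hS hpq.
have hs1 : mid r s.+1 by rewrite /mid; lia.
case: (boolP (mid r.+1 (cls p))) => hp; last first.
  have Epq : q = p by move: hpq; rewrite /pt (negbTE hp) => /eqP.
  exists id; split; first by move=> ? ? _ _.
  move=> u _; rewrite /pairZ Epq !eqxx /=.
  have hps : cls p != s.+1 by apply: contraNneq hp => ->; rewrite /mid; lia.
  apply/andP; split.
    by rewrite /edgeK (negbTE hps) !andbF.
  by apply/andP; split; rewrite /pt; case: ifP.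
have hq : mid r.+1 (cls q) by move: hpq; rewrite /pt hp.
pose rep u := if edgeK b1 u p then s.*2 - r else r.
have hrep : forall u, rep u <= s.*2 by move=> u; rewrite /rep; case: ifP; lia.
have hrepm : forall u, mid r (rep u) && ~~ mid r.+1 (rep u).
  by move=> u; rewrite /rep /mid; case: ifP; lia.
pose g u : VV := if u == p then q else if mid r (cls u)
   then (inord (rep u), inord (index u (enum S))) else u.
have g1 : g p = q by rewrite /g eqxx.
have g2 : forall u, u != p -> ~~ mid r (cls u) -> g u = u.
  by move=> u hu hm; rewrite /g (negbTE hu) (negbTE hm).
have g3 : forall u, u != p -> mid r (cls u) ->
    g u = (inord (rep u), inord (index u (enum S))).
  by move=> u hu hm; rewrite /g (negbTE hu) hm.
have hidx : forall u, index u (enum S) <= n.+1.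
  move=> u; apply: leq_trans (index_size _ _) _; rewrite -cardE; lia.
exists g; split.
- move=> u v hu hv.
  case: (eqVneq u p) => [->|hup]; case: (eqVneq v p) => [->|hvp] //.
  + case: (boolP (mid r (cls v))) => hmv.
      rewrite g1 g3 // => E; have := hrepm v; rewrite -(cls_inord (inord (index v (enum S))) (hrep v)) -E.
      by rewrite hq andbF.
    by rewrite g1 g2 // => E; move: hmv; rewrite -E (mid_down hq).
  + case: (boolP (mid r (cls u))) => hmu.
      rewrite g1 g3 // => E; have := hrepm u; rewrite -(cls_inord (inord (index u (enum S))) (hrep u)) E.
      by rewrite hq andbF.
    by rewrite g1 g2 // => E; move: hmu; rewrite E (mid_down hq).
  + case: (boolP (mid r (cls u))) => hmu; case: (boolP (mid r (cls v))) => hmv.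
    * rewrite !g3 // => -[_ /(congr1 (@nat_of_ord _))]; rewrite !inordK ?ltnS ?hidx // => Ei.
      have hu' : u \in enum S by rewrite mem_enum.
      have hv' : v \in enum S by rewrite mem_enum.
      by rewrite -(nth_index u hu') Ei nth_index.
    * rewrite g3 // g2 // => E; move: hmv; rewrite -E cls_inord //.
      by have := hrepm u; case/andP => ->.
    * rewrite g2 // g3 // => E; move: hmu; rewrite E cls_inord //.
      by have := hrepm v; case/andP => ->.
    * by rewrite !g2.
- move=> u hu; rewrite /pairZ.
  have hpq' : pt r p q by apply: pt_down.
  case: (eqVneq u p) => [->|hup].
    by rewrite g1 !eqxx !edgeK_irr /= hpq'.
  rewrite hpq' andbT /=.
  case: (boolP (mid r (cls u))) => hmu.
  + rewrite g3 //.
    have hneq : ((inord (rep u), inord (index u (enum S))) : VV) != q.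
      apply: contraTneq hq => <-; rewrite cls_inord //.
      by have := hrepm u; case/andP.
    rewrite (negbTE hneq) /pt hmu cls_inord // (andP (hrepm u)).1 andbT /=.
    rewrite {2}/edgeK hneq cls_inord //= /rep.
    case: ifP => he /=.
      apply/eqP; apply/esym; apply/andP; split; first by move: hq; rewrite /mid; lia.
      by apply/negP => /and3P [_ /eqP h _]; lia.
    by apply/eqP; apply/esym; apply/negbTE; rewrite negb_and; apply/orP; left; move: hq; rewrite /mid; lia.
  + rewrite g2 //.
    have huq : u != q by apply: contraNneq hmu => ->; apply: mid_down.
    rewrite (negbTE huq) /pt (negbTE hmu) eqxx /= ?andbT.
    rewrite /edgeK hup huq /=.
    have hu1 : cls u != s.+1 by apply: contraNneq hmu => ->.
    rewrite (negbTE hu1) !andbF /= !andbT.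
    rewrite eqxx andbT; apply/eqP; move: hmu hp hq; rewrite /mid => h1 h2 h3; apply/idP/idP; lia.
Qed.

Lemma pairZ_swap r b1 b2 u1 u2 w1 w2 :
  pairZ r b1 b2 u1 u2 w1 w2 = pairZ r b1 b2 u2 u1 w2 w1.
Proof.
rewrite /pairZ (eq_sym u1) (eq_sym w1) (edgeK_sym b1 u1) (edgeK_sym b2 w1).
by case: (pt r u1 w1); case: (pt r u2 w2); rewrite ?andbF ?andbT.
Qed.

Lemma pairZ_sym r b1 b2 u1 u2 w1 w2 :
  pairZ r b1 b2 u1 u2 w1 w2 -> pairZ r b2 b1 w1 w2 u1 u2.
Proof.
case/and4P => /eqP h1 /eqP h2 h3 h4; apply/and4P; split.
- by rewrite h1.
- by rewrite h2.
- exact: pt_sym.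
- exact: pt_sym.
Qed.

Lemma Z_sym r b1 b2 a b : Z r b1 b2 a b -> Z r b2 b1 b a.
Proof. exact: pairZ_sym. Qed.

Lemma forthZ r b1 b2 a b x (S : {set VV}) :
  r.+2 <= s -> #|S| <= n -> Z r.+1 b1 b2 a b ->
  exists g : VV -> VV, {in S &, injective g} /\
    forall u, u \in S -> Z r b1 b2 (upd eqb a x u) (upd eqb b x (g u)).
Proof.
move=> hrs hS hZ.
have hpq : pt r.+1 (a (~~ x)) (b (~~ x)).
  by case/and4P: hZ => _ _ h3 h4; case: x.
have [g [gi gZ]] := forth_core b1 b2 hrs hS hpq.
exists g; split => // u hu; move: (gZ u hu); clear gZ hpq gi.
by case: x => /=; rewrite /Z /upd /= => //; rewrite pairZ_swap.
Qed.

Lemma forth1 r b1 b2 a b x u : r.+2 <= s -> 0 < n -> Z r.+1 b1 b2 a b ->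
  exists w, Z r b1 b2 (upd eqb a x u) (upd eqb b x w).
Proof.
move=> hs hn hZ; have hS : #|[set u]| <= n by rewrite cards1.
have [g [_ gZ]] := forthZ x (S := [set u]) hs hS hZ.
by exists (g u); apply: gZ; rewrite set11.
Qed.

Fixpoint rk (f : C2 d) : nat :=
  match f with
  | C2_Not g => rk g
  | C2_And g h | C2_Or g h => maxn (rk g) (rk h)
  | C2_Ex _ g | C2_All _ g | C2_ExK _ _ g => (rk g).+1
  | _ => 0
  end.

Fixpoint mc (f : C2 d) : nat :=
  match f with
  | C2_Not g => mc g
  | C2_And g h | C2_Or g h => maxn (mc g) (mc h)
  | C2_Ex _ g | C2_All _ g => mc g
  | C2_ExK k _ g => maxn k (mc g)
  | _ => 0
  end.

Lemma inv f : forall r b1 b2 a b, rk f <= r -> r.+1 <= s -> mc f <= n -> 0 < n ->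
  Z r b1 b2 a b -> (C2_sat (K b1) a f <-> C2_sat (K b2) b f).
Proof.
elim: f => [x y|i x|x y|g IH|g IHg h IHh|g IHg h IHh|x g IH|x g IH|k x g IH]
   r b1 b2 a b /= hr hs hm hn hZ.
- have /and4P [_ /eqP hE _ _] := hZ.
  case: x; case: y => /=; rewrite ?edgeK_irr //.
    by rewrite edgeK_sym (edgeK_sym b2) hE.
  by rewrite hE.
- by [].
- have /and4P [/eqP hE _ _ _] := hZ.
  have hE' : (a vx = a vy) <-> (b vx = b vy).
    by split => h; apply/eqP; [rewrite -hE|rewrite hE]; apply/eqP.
  case: x; case: y => //=;
    first [exact hE' | by split=> h; symmetry; apply/hE'; symmetry].
- by rewrite (IH r b1 b2 a b).
- rewrite geq_max in hr; rewrite geq_max in hm; case/andP: hr => h1 h2; case/andP: hm => h3 h4.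
  by rewrite (IHg r b1 b2 a b) // (IHh r b1 b2 a b).
- rewrite geq_max in hr; rewrite geq_max in hm; case/andP: hr => h1 h2; case/andP: hm => h3 h4.
  by rewrite (IHg r b1 b2 a b) // (IHh r b1 b2 a b).
- case: r hr hs hZ => [//|r] hr hs hZ.
  split.
  + move=> [u Hu].
    have [w Hw] := forth1 x u hs hn hZ.
    by exists w; apply/(IH r b1 b2 _ _ hr (ltnW hs) hm hn Hw).
  + move=> [w Hw].
    have [u Hu] := forth1 x w hs hn (Z_sym hZ).
    by exists u; apply/(IH r b2 b1 _ _ hr (ltnW hs) hm hn Hu).
- case: r hr hs hZ => [//|r] hr hs hZ.
  split.
  + move=> H w.
    have [u Hu] := forth1 x w hs hn (Z_sym hZ).
    by apply/(IH r b2 b1 _ _ hr (ltnW hs) hm hn Hu).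
  + move=> H u.
    have [w Hw] := forth1 x u hs hn hZ.
    by apply/(IH r b1 b2 _ _ hr (ltnW hs) hm hn Hw).
- case: r hr hs hZ => [//|r] hr hs hZ.
  rewrite geq_max in hm; case/andP: hm => hk hm.
  have gen : forall b1 b2 a b, Z r.+1 b1 b2 a b ->
     at_least k (fun u => C2_sat (K b1) (upd eqb a x u) g) ->
     at_least k (fun u => C2_sat (K b2) (upd eqb b x u) g).
    move=> c1 c2 a' b' hZ' /at_least_exact [S [hS HS]].
    have [gf [gi gZ]] := forthZ x hs (leq_trans (eq_leq hS) hk) hZ'.
    exists (gf @: S); split; first by rewrite card_in_imset // hS.
    move=> w /imsetP [u hu ->].
    by apply: (IH r c1 c2 _ _ hr (ltnW hs) hm hn (gZ u hu)).1; apply: HS.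
  split; first exact: gen.
  exact: gen (Z_sym hZ).
Qed.

End Game.

Lemma pt_refl s n r (u : VV s n) : pt r u u.
Proof. rewrite /pt; case: ifP => _ //. Qed.

Lemma Pn_Kfalse d s n v : Pn (K d s n false) v.
Proof.
split; first exact: edgeK_sym.
move=> x y hxy.
have gen : forall x y : VV s n, x <> y -> cls x <= cls y ->
    forall z, edgeK false x z -> z <> y -> edgeK false y z.
  move=> x1 y1 _ hle z; rewrite /edgeK /= !andbT => /andP [h1 h2] hzy.
  apply/andP; split; first by apply/eqP => E; apply: hzy.
  lia.
case: (leqP (cls x) (cls y)) => h.
  by left; apply: gen.
by right; apply: gen; [move=> E; apply: hxy | exact: ltnW].
Qed.

Lemma not_Pn_Ktrue d s n v : 0 < s -> ~ Pn (K d s n true) v.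
Proof.
move=> hs [_ Hn].
pose x : VV s n := (inord s, inord 0).
pose y : VV s n := (inord s.+1, inord 0).
pose z : VV s n := (inord s.+1, inord 1).
pose w : VV s n := (inord s, inord 1).
have cx : cls x = s by rewrite /cls /= inordK //; lia.
have cy : cls y = s.+1 by rewrite /cls /= inordK //; lia.
have cz : cls z = s.+1 by rewrite /cls /= inordK //; lia.
have cw : cls w = s by rewrite /cls /= inordK //; lia.
have ne : forall (u1 u2 : VV s n), cls u1 != cls u2 -> u1 != u2.
  by move=> u1 u2; apply: contraNneq => ->.
have ne2 : forall (u1 u2 : VV s n), u1.2 != u2.2 -> u1 != u2.
  by move=> u1 u2; apply: contraNneq => ->.
have c0 : (inord 0 : 'I_n.+2) != inord 1.
  by apply/eqP => /(congr1 (@nat_of_ord _)); rewrite !inordK.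
have hxy : x <> y by apply/eqP; apply: ne; rewrite cx cy; lia.
have exz : edgeK true x z.
  rewrite /edgeK cx cz; apply/and3P; split; [apply: ne; rewrite cx cz|..]; lia.
have nyz : ~~ edgeK true y z by rewrite /edgeK cy cz eqxx /= !andbF.
have zy : z <> y by apply/eqP; apply: ne2; rewrite /= eq_sym.
have eyw : edgeK true y w.
  rewrite /edgeK cy cw; apply/and3P; split; [apply: ne; rewrite cy cw|..]; lia.
have nxw : ~~ edgeK true x w by rewrite /edgeK cx cw; apply/negP => /and3P [_ h _]; lia.
have wx : w <> x by apply/eqP; apply: ne2; rewrite /= eq_sym.
case: (Hn x y hxy) => H.
- by move: nyz; have /= -> := H z exz zy.
- by move: nxw; have /= -> := H w eyw wx.
Qed.

Lemma notC2 d (C : gclass d) :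
  (forall s n b, C _ (K d s n b)) -> ~ C2_expressible C (@Pn d).
Proof.
move=> HC [phi [_ Hsem]].
pose s := (rk phi).+2; pose n := (mc phi).+1.
pose a := fun _ : var2 => ((ord0, ord0) : VV s n).
have hZ : Z (rk phi) false true a a.
  by rewrite /Z /pairZ /a /= !pt_refl.
have := @inv d s n phi (rk phi) false true a a (leqnn _) (leqnSn _) (leqnSn _) (ltn0Sn _) hZ.
rewrite (Hsem _ _ (HC s n false)) (Hsem _ _ (HC s n true)) => E.
apply: (@not_Pn_Ktrue d s n (a vx)) => //.
by apply/E; apply: Pn_Kfalse.
Qed.

Theorem theorem7 (d : nat) :
  strict_gain (all_graphs d) /\ strict_gain (undirected_graphs d).
Proof.
split; split.
- by move=> P; apply: part1.
- exists (@Pn d); split; first exact: Pn_FO.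
  split; first exact: Pn_IC2.
  by apply: notC2.
- by move=> P; apply: part1.
- exists (@Pn d); split; first exact: Pn_FO.
  split; first exact: Pn_IC2.
  by apply: notC2 => s n b; apply: edgeK_sym.
Qed.
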